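(* Let $\varepsilon>0$ be small, $x$ large, $0\le\theta\le\frac1{30}$, $\rho=\frac37(1-4\theta)-\varepsilon$, and $z_2\le x^{1/3-2\theta-2\varepsilon^2}$. Let $$\mathcal{D}^{-,\mathrm{SEM}}=\{p_1\cdots p_r\le x^{\rho}:\ z_2\ge p_1>\dots>p_r,\ p_1\cdots p_{2k-1}p_{2k}^2\le x^{\rho}\text{ for all }k\ge1\}$$ ($p_i$ primes). Then for any $D\in[x^{1/3-2\theta-2\varepsilon^2},x^{\rho}]$, every $d\in\mathcal{D}^{-,\mathrm{SEM}}$ can be written as $d=d_1d_2$ with positive integers $d_1,d_2$ satisfying $d_1\le D$ and $d_1d_2^2\le x^{1-4\theta-2\varepsilon^2}/D$; moreover one can take either $d_1\ge x^{0.1}$ or $d_2=1$.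
   Context: Conditions in the definition of $\mathcal{D}^{-,\mathrm{SEM}}$ involving indices larger than $r$ are vacuous. *)

(* Defs.v *)
From Stdlib Require Import Reals.
From mathcomp Require Import all_boot.
Set Implicit Arguments. Unset Strict Implicit. Unset Printing Implicit Defensive.

Open Scope R_scope.

Definition seqprod (s : seq nat) : nat := foldr muln 1%nat s.

(* With 0-based list s = [p_1; ...; p_r], p_{2k} = nth 0 s (2k-1). *)
Definition in_Dminus_SEM (x rho z2 : R) (d : nat) : Prop :=
  exists s : seq nat,
    [/\ all prime s,
        sorted (fun a b => b < a)%nat s,
        (forall p, p \in s -> INR p <= z2),
        d = seqprod s &
        INR d <= Rpower x rho] /\
    (forall k : nat, (1 <= k)%nat -> (2 * k <= size s)%nat ->
       INR (seqprod (take (2 * k - 1) s) * (nth 0%nat s (2 * k - 1)) ^ 2)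
         <= Rpower x rho).

(* Main.v *)
Require Import Defs.
From Stdlib Require Import Reals Lra Psatz Classical.
From mathcomp Require Import all_boot.
Open Scope R_scope.

Lemma INR_muln (m n : nat) : INR (m * n)%N = INR m * INR n.
Proof. by rewrite -multE mult_INR. Qed.

Lemma seqprod_cat s1 s2 : seqprod (s1 ++ s2) = (seqprod s1 * seqprod s2)%N.
Proof. elim: s1 => [|a s IH] /=; first by rewrite mul1n. by rewrite IH mulnA. Qed.

Lemma seqprod_gt0 s : all prime s -> (0 < seqprod s)%N.
Proof.
elim: s => [|a s IH] //= /andP [pa ps].
by rewrite muln_gt0 (prime_gt0 pa) IH.
Qed.

Lemma last_true (P : nat -> Prop) n :
  P 1%N -> ~ P (1 + n)%N -> exists j, [/\ (1 <= j <= n)%N, P j & ~ P j.+1].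
Proof.
elim: n => [|n IH] H1 Hn; first by [].
case: (classic (P (1 + n)%N)) => Hp.
  exists (1 + n)%N; split => //. by rewrite add1n ltnS leqnn andbT.
have [j [/andP [j1 jn] Pj nPj]] := IH H1 Hp.
exists j; split => //. by rewrite j1 /= (leq_trans jn).
Qed.

Lemma Rpow_pos x c : 0 < Rpower x c.
Proof. unfold Rpower. apply exp_pos. Qed.

Lemma INR_pos n : (0 < n)%N -> 0 < INR n.
Proof. move=> h. apply lt_0_INR. by apply/ltP. Qed.

Theorem lemma10 :
  exists eps0 : R, 0 < eps0 /\
  forall eps : R, 0 < eps < eps0 ->
  exists x0 : R, 0 < x0 /\
  forall x : R, x0 <= x ->
  forall theta : R, 0 <= theta <= 1 / 30 ->
  let rho := 3 / 7 * (1 - 4 * theta) - eps in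
  forall z2 : R, z2 <= Rpower x (1 / 3 - 2 * theta - 2 * eps ^ 2) ->
  forall D : R, Rpower x (1 / 3 - 2 * theta - 2 * eps ^ 2) <= D <= Rpower x rho ->
  forall d : nat, in_Dminus_SEM x rho z2 d ->
  exists d1 d2 : nat,
    [/\ d = (d1 * d2)%nat, (0 < d1)%nat & (0 < d2)%nat] /\
    [/\ INR d1 <= D,
        INR (d1 * d2 ^ 2) <= Rpower x (1 - 4 * theta - 2 * eps ^ 2) / D &
        (Rpower x (1 / 10) <= INR d1 \/ d2 = 1%nat)].
Proof.
exists (1/10); split; first lra.
move=> eps [he0 he1]; exists 1; split; first lra.
move=> x hx theta [ht0 ht1] rho z2 hz2 D [hD1 hD2] d [s [[ps srt hz -> hdle] hk]].
have he2 : eps ^ 2 <= eps / 10 by nra.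
have Hpow : forall c c', c <= c' -> Rpower x c <= Rpower x c'.
  by move=> c c' h; apply Rle_Rpower.
have Dpos : 0 < D by apply: Rlt_le_trans (Rpow_pos _ _) hD1.
have HB : INR (seqprod s) * D <= Rpower x (1 - 4 * theta - 2 * eps ^ 2) -> 
   INR (seqprod s) <= Rpower x (1 - 4 * theta - 2 * eps ^ 2) / D.
  move=> h. apply (Rmult_le_reg_r D) => //. by field_simplify; lra.
have dpos := @seqprod_gt0 _ ps.
case: (Rle_dec (INR (seqprod s)) D) => hdD.
  exists (seqprod s), 1%N; split; first by rewrite muln1.
  split => //; last by right.
  rewrite exp1n !muln1; apply: HB.
  apply: Rle_trans (Hpow (rho + rho) _ _); last by rewrite /rho; lra.
  rewrite Rpower_plus. apply Rmult_le_compat => //; try apply pos_INR; lra.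
have hdD' : D < INR (seqprod s) by lra.
case: s ps srt hz hdle hk dpos hdD' hdD HB => [|a t] ps srt hz hdle hk dpos hdD' hdD HB.
  exfalso; move: hdD' => /=.
  have := Hpow 0 (1 / 3 - 2 * theta - 2 * eps ^ 2) ltac:(nra).
  rewrite Rpower_O; last lra. lra.
set s := a :: t in ps srt hz hdle hk dpos hdD' hdD HB *.
pose P j := INR (seqprod (take j s)) <= D.
have P1 : P 1%N.
  rewrite /P /seqprod /= take0 /= muln1. apply: Rle_trans (hz a _) _; first by rewrite inE eqxx.
  lra.
have Pn : ~ P (1 + size t)%N by rewrite /P (_ : (1 + size t)%N = size s) // take_size; lra.
have [j [/andP [j1 jt] Pj nPj]] := @last_true P _ P1 Pn.
have js : (j < size s)%N by rewrite /= ltnS.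
pose p := nth 0%N s j.
have hsplit : seqprod (take j.+1 s) = (seqprod (take j s) * p)%N.
  by rewrite (take_nth 0%N js) -cats1 seqprod_cat /= muln1.
have srt' : sorted geq s.
  by apply: sub_sorted srt => u v /= h; apply: ltnW.
have hnth : forall i k, (i <= k < size s)%N -> (nth 0%N s k <= nth 0%N s i)%N.
  move=> i k /andP [ik ks].
  have gtr : transitive geq by move=> v u w /= h1 h2; apply: leq_trans h2 h1.
  have := sorted_leq_nth gtr (fun u => leqnn u) 0%N srt'.
  move=> /(_ i k) H. apply: H => //; rewrite inE /=.
  by apply: leq_ltn_trans ik ks.
have s2 : (2 * 1 <= size s)%N by rewrite muln1; apply: leq_ltn_trans j1 js.
have hk1 := hk 1%N isT s2.
rewrite muln1 /= in hk1.
rewrite take0 /= muln1 -mulnn !INR_muln in hk1.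
have hpq : INR p <= INR (nth 0%N t 0).
  apply le_INR; apply/leP; apply: (hnth 1%N j). by rewrite j1 js.
have hpa : INR p <= INR a.
  apply le_INR; apply/leP; apply: (hnth 0%N j). by rewrite js.
pose X := Rpower x (rho / 3).
have X3 : X * X * X = Rpower x rho.
  rewrite /X -!Rpower_plus. f_equal. field.
have Xpos : 0 < X by apply Rpow_pos.
have p0 := pos_INR p.
have hpX : INR p <= X.
  apply Rnot_lt_le => hlt.
  have h1 : X * X * X < INR p * INR p * INR p.
    apply Rmult_le_0_lt_compat; try nra.
  have q0 := pos_INR (nth 0%N t 0).
  have h2 : INR p * INR p * INR p <= INR a * (INR (nth 0%N t 0) * INR (nth 0%N t 0)).
    rewrite (_ : INR p * INR p * INR p = INR p * (INR p * INR p)); last ring.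
    apply Rmult_le_compat; try nra.
  lra.

have hd : seqprod s = (seqprod (take j s) * seqprod (drop j s))%N.
  by rewrite -seqprod_cat cat_take_drop.
have : (0 < seqprod (take j s) * seqprod (drop j s))%N by rewrite -hd.
rewrite muln_gt0 => /andP [d1pos d2pos].
exists (seqprod (take j s)), (seqprod (drop j s)); split; first by [].
have hlt : D < INR (seqprod (take j s)) * INR p.
  rewrite -INR_muln -hsplit. by apply Rnot_le_lt.
set u := INR (seqprod (take j s)) in hlt Pj *.
have u0 : 0 <= u by apply pos_INR.
have hdle' := hdle; rewrite hd INR_muln in hdle'.
set v := INR (seqprod (drop j s)) in hdle' *.
have v0 : 0 <= v by apply pos_INR.
split => //.
- rewrite -mulnn !INR_muln -/u -/v.
  apply (Rmult_le_reg_r D) => //. 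
  have -> : Rpower x (1 - 4 * theta - 2 * eps ^ 2) / D * D = Rpower x (1 - 4 * theta - 2 * eps ^ 2) by field; lra.
  apply: Rle_trans (Hpow (rho + rho + rho / 3) _ _); last by rewrite /rho; lra.
  rewrite (Rpower_plus (rho + rho)) (Rpower_plus rho rho) -/X.
  have uvv : 0 <= u * (v * v) by nra.
  apply: Rle_trans (_ : u * (v * v) * (u * INR p) <= _).
    apply Rmult_le_compat_l => //; lra.
  have -> : u * (v * v) * (u * INR p) = (u * v) * (u * v) * INR p by ring.
  have uv0 : 0 <= u * v by nra.
  apply Rmult_le_compat => //; try nra.
  apply Rmult_le_compat => //.
- left.
  have hx1 : Rpower x (1 / 10) * X <= Rpower x (1 / 3 - 2 * theta - 2 * eps ^ 2).
    rewrite /X -Rpower_plus. apply Hpow. rewrite /rho. nra.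
  have : Rpower x (1 / 10) * X < u * X.
    have : u * INR p <= u * X by apply Rmult_le_compat_l.
    lra.
  move=> h. apply Rlt_le. apply (Rmult_lt_reg_r X) => //.
Qed.
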